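(* Let $V$ be a finite nonempty set and $f:\{0,1\}^V\to\{0,1\}^V$. (1) $f$ is positive-circular if and only if $f$ is even-self-dual and non-expansive. (2) $f$ is negative-circular if and only if $f$ is odd-self-dual and non-expansive.
   Context: For $x,y\in\{0,1\}^V$, $x\oplus y$ is componentwise addition mod 2, $1$ is the all-ones point, $\|x\|$ is the number of $1$s of $x$, $d(x,y)=\|x\oplus y\|$; $x$ is even (odd) if $\|x\|$ is even (odd). $f$ is non-expansive if $d(f(x),f(y))\le d(x,y)$ for all $x,y$. The conjugate is $\tilde f(x)=f(x)\oplus x$. $f$ is self-dual if $f(x\oplus1)=f(x)\oplus1$ for all $x$; even (odd) if $\tilde f(\{0,1\}^V)$ is exactly the set of even (odd) points; even-self-dual (odd-self-dual) if both even (odd) and self-dual. For $x^{j\alpha}$ the point equal to $x$ except its $j$-component is $\alpha$, the global interaction graph $G(f)$ is the signed digraph on $V$ with a positive (resp. negative) arc from $j$ to $i$ iff $f_i(x^{j1})-f_i(x^{j0})=1$ (resp. $=-1$) for at least one $x$ (so there may be both a positive and a negative arc from $j$ to $i$; loops allowed). A cycle is a subgraph with at most one arc between any ordered pair of vertices whose underlying unsigned digraph is a directed cycle; it is positive (negative) if it has an even (odd) number of negative arcs. $f$ is positive-circular (negative-circular) if $G(f)$ itself is a positive (negative) cycle (passing through all vertices of $V$). *)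

(* Defs.v *)
From mathcomp Require Import all_boot.
Set Implicit Arguments. Unset Strict Implicit. Unset Printing Implicit Defensive.

Section BoolNet.
Variable V : finType.

Definition point := {ffun V -> bool}.

Definition pxor (x y : point) : point := [ffun i => x i (+) y i].
Definition pone : point := [ffun _ => true].
Definition weight (x : point) : nat := #|[set i | x i]|.
Definition hdist (x y : point) : nat := weight (pxor x y).
Definition even_point (x : point) : bool := ~~ odd (weight x).
Definition odd_point (x : point) : bool := odd (weight x).

Definition non_expansive (f : point -> point) : Prop :=
  forall x y, hdist (f x) (f y) <= hdist x y.

Definition conjugate (f : point -> point) (x : point) : point := pxor (f x) x.

Definition self_dual (f : point -> point) : Prop :=
  forall x, f (pxor x pone) = pxor (f x) pone.

Definition even_map (f : point -> point) : Prop :=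
  [set conjugate f x | x in [set: point]] = [set y : point | even_point y].
Definition odd_map (f : point -> point) : Prop :=
  [set conjugate f x | x in [set: point]] = [set y : point | odd_point y].

Definition even_self_dual f := even_map f /\ self_dual f.
Definition odd_self_dual f := odd_map f /\ self_dual f.

Definition setc (x : point) (j : V) (a : bool) : point :=
  [ffun k => if k == j then a else x k].

(* arcs of the global interaction graph G(f), from j to i *)
Definition pos_arc (f : point -> point) (j i : V) : bool :=
  [exists x : point, f (setc x j true) i && ~~ f (setc x j false) i].
Definition neg_arc (f : point -> point) (j i : V) : bool :=
  [exists x : point, ~~ f (setc x j true) i && f (setc x j false) i].
Definition arc f j i := pos_arc f j i || neg_arc f j i.

(* G(f) itself is a cycle through all vertices: at most one arc per ordered
   pair, and the underlying unsigned digraph is a directed (Hamiltonian)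
   cycle, i.e. the functional graph of a successor map with a single orbit. *)
Definition is_cycle_graph (f : point -> point) : Prop :=
  (forall j i, ~~ (pos_arc f j i && neg_arc f j i)) /\
  exists s : V -> V,
    (forall j i, arc f j i <-> i = s j) /\
    (forall i j, exists k, iter k s i = j).

Definition num_neg_arcs (f : point -> point) : nat :=
  #|[set p : V * V | neg_arc f p.1 p.2]|.

Definition positive_circular f := is_cycle_graph f /\ ~~ odd (num_neg_arcs f).
Definition negative_circular f := is_cycle_graph f /\ odd (num_neg_arcs f).

End BoolNet.

(* Main.v *)
Require Import Defs.
From mathcomp Require Import all_boot zify.
Set Implicit Arguments. Unset Strict Implicit. Unset Printing Implicit Defensive.

Definition par {V : finType} (x : point V) := \big[addb/false]_(i : V) x i.
Definition pz {V : finType} : point V := [ffun _ => false].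
Definition pe {V : finType} (k : V) : point V := [ffun j => j == k].
Definition Form {V : finType} (f : point V -> point V) (s : V -> V) (c : point V) :=
  injective s /\ forall x j, f x (s j) = x j (+) c (s j).
Definition Orbit {V : finType} (s : V -> V) := forall i j, exists k, iter k s i = j.

Lemma wpar {V : finType} (x : point V) : odd (weight x) = par x.
Proof.
rewrite /weight -sum1_card big_mkcond (big_morph odd oddD (erefl (odd 0))) /par.
by apply: eq_bigr => i _; rewrite inE; case: (x i).
Qed.

Lemma par_xor {V : finType} (x y : point V) : par (pxor x y) = par x (+) par y.
Proof. by rewrite /par -big_split; apply: eq_bigr => i _; rewrite ffunE. Qed.

Lemma par_pz {V : finType} : par (@pz V) = false.
Proof. by rewrite /par big1 // => i _; rewrite ffunE. Qed.

Lemma parP_pe {V : finType} (P : pred V) (k : V) :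
  \big[addb/false]_(m | P m) (pe k m) = P k.
Proof.
case Pk: (P k).
  rewrite (bigD1 k) //= ffunE eqxx big1 // => m /andP[_ h].
  by rewrite ffunE (negbTE h).
rewrite big1 // => m Pm; rewrite ffunE; apply/eqP => e.
by rewrite -e Pm in Pk.
Qed.

Lemma par_pe {V : finType} (k : V) : par (pe k) = true.
Proof. exact: (parP_pe predT k). Qed.

Lemma hdistE {V : finType} (x y : point V) : hdist x y = #|[set i | x i != y i]|.
Proof.
rewrite /hdist /weight; apply: eq_card => i; rewrite !inE ffunE.
by case: (x i); case: (y i).
Qed.

Lemma hdist_anti {V : finType} (a b : point V) :
  hdist a b + hdist b (pxor a (pone V)) = #|V|.
Proof.
rewrite !hdistE -(cardsC [set i | a i != b i]); congr (_ + _).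
by apply: eq_card => i; rewrite !inE !ffunE; case: (a i); case: (b i).
Qed.

Lemma sd_ne_iso {V : finType} (f : point V -> point V) :
  self_dual f -> non_expansive f -> forall x y, hdist (f x) (f y) = hdist x y.
Proof.
move=> sd ne x y.
have h1 := ne x y; have h2 := ne y (pxor x (pone V)).
rewrite sd in h2.
have := hdist_anti x y; have := hdist_anti (f x) (f y). lia.
Qed.

Lemma hdist_xorr {V : finType} (a b c : point V) :
  hdist (pxor a c) (pxor b c) = hdist a b.
Proof.
rewrite !hdistE; apply: eq_card => i; rewrite !inE !ffunE.
by case: (a i); case: (b i); case: (c i).
Qed.

Lemma weight_hd {V : finType} (y : point V) : weight y = hdist y pz.
Proof.
rewrite hdistE /weight; apply: eq_card => i; rewrite !inE ffunE.
by case: (y i).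
Qed.

Lemma wpos {V : finType} (y : point V) k : y k -> 0 < weight y.
Proof. by move=> yk; rewrite /weight (cardsD1 k) inE yk. Qed.

Lemma hd_e {V : finType} (y : point V) k :
  hdist y (pe k) = if y k then (weight y).-1 else (weight y).+1.
Proof.
rewrite hdistE /weight; case: ifP => yk.
  rewrite (cardsD1 k [set i | y i]) inE yk add1n /=.
  apply: eq_card => i; rewrite !inE ffunE.
  by case: (eqVneq i k) => [->|ne]; rewrite ?yk //=; case: (y i).
transitivity #|k |: [set i | y i]|; last by rewrite cardsU1 inE yk.
apply: eq_card => i; rewrite !inE ffunE.
by case: (eqVneq i k) => [->|ne]; rewrite ?yk //=; case: (y i).
Qed.

Lemma weight_pe {V : finType} (k : V) : weight (pe k) = 1.
Proof.
rewrite /weight (_ : [set i | pe k i] = [set k]) ?cards1 //.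
by apply/setP => i; rewrite !inE ffunE.
Qed.

Lemma iso_form {V : finType} (f : point V -> point V) :
  (forall x y, hdist (f x) (f y) = hdist x y) -> exists s c, Form f s c.
Proof.
move=> iso.
pose c := f pz.
pose g x := pxor (f x) c.
have gd x y : hdist (g x) (g y) = hdist x y by rewrite hdist_xorr iso.
have gz : g pz = pz by apply/ffunP => i; rewrite !ffunE addbb.
have wg x : weight (g x) = weight x by rewrite !weight_hd -{1}gz gd.
pose s j := odflt j [pick k | g (pe j) k].
have gpe j : g (pe j) = pe (s j).
  have /cards1P [k0 Ek0] : #|[set i | g (pe j) i]| == 1.
    by have := wg (pe j); rewrite weight_pe /weight => ->.
  rewrite /s; case: pickP => [k hk|none] /=.
    have : k \in [set i | g (pe j) i] by rewrite inE.
    rewrite Ek0 inE => /eqP ek; subst k0.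
    apply/ffunP => i; rewrite [in RHS]ffunE.
    by move/setP: Ek0 => /(_ i); rewrite !inE.
  have : k0 \in [set i | g (pe j) i] by rewrite Ek0 inE.
  by rewrite inE none.
have key x j : g x (s j) = x j.
  have := gd x (pe j); rewrite gpe !hd_e wg.
  case hx: (x j); case hg: (g x (s j)) => //.
    by have := wpos hx; lia.
  by have := wpos hg; rewrite wg; lia.
exists s, c; split.
  move=> j1 j2 E.
  have := key (pe j1) j2; rewrite -E key !ffunE eqxx.
  by move/esym/eqP.
by move=> x j; rewrite -(key x j) ffunE -addbA addbb addbF.
Qed.

Section FormLemmas.
Context {V : finType} (f : point V -> point V) (s : V -> V) (c : point V)
  (F : Form f s c).

Let sinj : injective s := proj1 F.
Let fs : forall x j, f x (s j) = x j (+) c (s j) := proj2 F.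

Lemma form_fx x i : f x i = x (invF sinj i) (+) c i.
Proof. by have := fs x (invF sinj i); rewrite f_invF. Qed.

Lemma form_sd : self_dual f /\ non_expansive f.
Proof.
split.
  move=> x; apply/ffunP => i; rewrite !ffunE !form_fx !ffunE.
  by case: (x _); case: (c i).
move=> x y; rewrite !hdistE.
rewrite (_ : [set i | f x i != f y i] = s @: [set j | x j != y j]).
  by rewrite card_imset.
apply/setP => i; rewrite inE -{1 2 3}(f_invF sinj i) (mem_imset _ _ sinj) inE !fs.
by case: (x _); case: (y _); case: (c _).
Qed.

Lemma form_par x : par (f x) = par x (+) par c.
Proof.
rewrite /par [in LHS](reindex_inj sinj) /= (eq_bigr _ (fun j _ => fs x j)).
by rewrite big_split /=; congr (_ (+) _); rewrite [in RHS](reindex_inj sinj).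
Qed.

Lemma par_conj x : par (conjugate f x) = par c.
Proof.
by rewrite /conjugate par_xor form_par; case: (par x); case: (par c).
Qed.

Lemma par_setc0 (y : point V) i0 : par y = y i0 (+) par (setc y i0 false).
Proof.
rewrite /par (bigD1 i0) // [in RHS](bigD1 i0) //= /setc ffunE eqxx /=.
by congr (_ (+) _); apply: eq_bigr => j hj; rewrite ffunE (negbTE hj).
Qed.

Lemma conj_inj (O : Orbit s) i0 x y :
  conjugate f x = conjugate f y -> x i0 = y i0 -> x = y.
Proof.
move=> E h0.
have E1 j : x j (+) y j = x (s j) (+) y (s j).
  move/ffunP: E => /(_ (s j)); rewrite !ffunE !fs.
  by case: (x j); case: (y j); case: (x (s j)); case: (y (s j)); case: (c (s j)).
have Ek k : x (iter k s i0) = y (iter k s i0).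
  elim: k => [//|k IH]; rewrite iterS.
  have := E1 (iter k s i0); rewrite IH addbb.
  by case: (x _); case: (y _).
apply/ffunP => j; have [k <-] := O i0 j; exact: Ek.
Qed.

Lemma form_image (O : Orbit s) (i0 : V) :
  [set conjugate f x | x in [set: point V]] = [set y | par y == par c].
Proof.
set I := [set conjugate f x | x in _]; set T := [set y | _].
pose A := [set x : point V | ~~ x i0].
have sub : I \subset T by apply/subsetP => _ /imsetP [x _ ->]; rewrite inE par_conj.
have cardTA : #|T| <= #|A|.
  have inj : {in T &, injective (fun y => setc y i0 false)}.
    move=> y y'; rewrite !inE => hy hy' E.
    apply/ffunP => k; case: (eqVneq k i0) => [->|nk].
      have h1 := par_setc0 y i0; have h2 := par_setc0 y' i0.
      rewrite E (eqP hy) in h1; rewrite (eqP hy') in h2.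
      move: h1 h2; set q := par (setc y' i0 false); case: (y i0); case: (y' i0); case: q; case: (par c) => /= h1 h2; congruence.
    by move/ffunP: E => /(_ k); rewrite !ffunE (negbTE nk).
  rewrite -(card_in_imset inj); apply: subset_leq_card.
  by apply/subsetP => _ /imsetP [y _ ->]; rewrite inE ffunE eqxx.
have cardAI : #|A| <= #|I|.
  have injA : {in A &, injective (conjugate f)}.
    move=> x y; rewrite !inE => hx hy E; apply: (conj_inj O (i0 := i0) E).
    by move: hx hy; case: (x i0); case: (y i0).
  rewrite -(card_in_imset injA); apply: subset_leq_card.
  by apply/subsetP => _ /imsetP [x _ ->]; rewrite imset_f ?inE.
apply/eqP; rewrite eqEcard sub /=; exact: leq_trans cardTA cardAI.
Qed.

Lemma form_orbit :
  (forall a b, a != b -> exists u, u \in [set conjugate f x | x in [set: point V]] /\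
     pxor (pxor u (pe a)) (pe b) \in [set conjugate f x | x in [set: point V]]) ->
  Orbit s.
Proof.
move=> H i j.
suff h : fconnect s i j by exists (findex s i j); exact: iter_findex h.
case: (boolP (fconnect s i j)) => // nc; exfalso.
have nij : i != j by apply/eqP => e; rewrite e connect0 in nc.
have [u [hu hv]] := H i j nij.
pose S := [pred k | fconnect s i k].
pose parS (y : point V) := \big[addb/false]_(k | S k) y k.
have mem k : S (s k) = S k.
  rewrite /S /=; apply/idP/idP => h.
    by apply: connect_trans h _; rewrite fconnect_sym // fconnect1.
  exact: connect_trans h (fconnect1 s k).
have pxS a b : parS (pxor a b) = parS a (+) parS b.
  by rewrite /parS -big_split; apply: eq_bigr => k _; rewrite ffunE.
have pfS x : parS (f x) = parS x (+) parS c.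
  rewrite /parS (reindex_inj sinj) /=.
  rewrite (eq_big S (fun j => x j (+) c (s j)) mem (fun j _ => fs x j)).
  rewrite big_split /=; congr (_ (+) _).
  rewrite [in RHS](reindex_inj sinj) /=.
  by apply: eq_big => // k; exact: (esym (mem k)).
have pcS x : parS (conjugate f x) = parS c.
  by rewrite /conjugate pxS pfS; case: (parS x); case: (parS c).
have peS k : parS (pe k) = S k by exact: parP_pe.
move: hu hv => /imsetP [x _ ->] /imsetP [x' _].
move/(congr1 parS); rewrite !pxS !peS !pfS /S /= connect0 (negbTE nc).
by case: (parS c); case: (parS x); case: (parS x').
Qed.

End FormLemmas.

Lemma circ_form {V : finType} (f : point V -> point V) :
  is_cycle_graph f -> exists s c, Form f s c /\ Orbit s.
Proof.
case=> nb [s [arcs orb]].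
have surj i : exists j, s j = i.
  have [[|k] hk] := orb (s i) i; first by exists i.
  by exists (iter k s (s i)); rewrite -iterS.
have sinj : injective s.
  have h : {in predT &, injective s}.
    apply/image_injP/eqP; apply: eq_card => i.
    have [j <-] := surj i; by rewrite image_f.
  by move=> a b; apply: h.
pose p := invF sinj.
have noarc j i : j != p i -> forall x b b', f (setc x j b) i = f (setc x j b') i.
  move=> nj x b b'.
  have na : ~~ Defs.arc f j i.
    apply/negP => /arcs ei; move: nj; by rewrite ei /p invF_f eqxx.
  move: na; rewrite /Defs.arc negb_or => /andP [/existsPn /(_ x) np /existsPn /(_ x) nn].
  move: np nn.
  by case: b; case: b'; case: (f (setc x j true) i); case: (f (setc x j false) i).
have dep i (x y : point V) : x (p i) = y (p i) -> f x i = f y i.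
  move=> hxy.
  have gen : forall (r : seq V) (x y : point V), p i \notin r ->
      (forall k, k \notin r -> x k = y k) -> f x i = f y i.
    elim => [|j r IH] x0 y0 hpi hk.
      by have -> : x0 = y0 by apply/ffunP => k; exact: hk.
    move: hpi; rewrite in_cons negb_or => /andP [hj hr].
    rewrite (_ : x0 = setc x0 j (x0 j)); last first.
      by apply/ffunP => k; rewrite ffunE; case: eqP => // ->.
    rewrite (noarc j i _ x0 (x0 j) (y0 j)); last by rewrite eq_sym.
    apply: IH => // k hkr; rewrite ffunE; case: eqP => [->//|nkj].
    by apply: hk; rewrite in_cons negb_or hkr andbT; apply/eqP.
  apply: (gen [seq k <- enum V | k != p i]); first by rewrite mem_filter eqxx.
  by move=> k; rewrite mem_filter mem_enum andbT => /negPn/eqP ->.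
pose c := f pz.
have fx x i : f x i = x (p i) (+) c i.
  have [x0 hx0] : exists x0, f (setc x0 (p i) true) i != f (setc x0 (p i) false) i.
    have : Defs.arc f (p i) i by apply/arcs; rewrite /p f_invF.
    case/orP => /existsP [x0 /andP [h1 h0]]; exists x0; move: h1 h0;
      by case: (f _ i); case: (f _ i).
  have e1 : f (setc pz (p i) true) i = ~~ c i.
    rewrite (dep i _ (setc x0 (p i) true)); last by rewrite !ffunE eqxx.
    rewrite /c (dep i pz (setc x0 (p i) false)); last by rewrite !ffunE eqxx.
    by move: hx0; case: (f _ i); case: (f _ i).
  case hx: (x (p i)).
    by rewrite (dep i x (setc pz (p i) true)) ?e1 // ffunE eqxx.
  by rewrite (dep i x pz) // ffunE.
exists s, c; split => //; split => // x j.
by rewrite fx /p invF_f.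
Qed.

Lemma form_circ {V : finType} (f : point V -> point V) s c :
  Form f s c -> Orbit s -> is_cycle_graph f /\ num_neg_arcs f = weight c.
Proof.
move=> F O.
pose sinj := proj1 F.
pose p := invF sinj.
have fe j i (x : point V) (b : bool) : f (setc x j b) i = (if p i == j then b else x (p i)) (+) c i.
  by rewrite (form_fx F) ffunE.
have posE j i : pos_arc f j i = (j == p i) && ~~ c i.
  rewrite /pos_arc; case: (eqVneq (p i) j) => [<-|ne] /=.
    apply/existsP/idP => [[x]|h]; last exists pz; rewrite !fe eqxx //.
      by case: (c i).
    by move: h; case: (c i).
  apply/existsP => [[x]]; rewrite !fe (negbTE ne).
  by case: (x _); case: (c i).
have negE j i : neg_arc f j i = (j == p i) && c i.
  rewrite /neg_arc; case: (eqVneq (p i) j) => [<-|ne] /=.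
    apply/existsP/idP => [[x]|h]; last exists pz; rewrite !fe eqxx //.
      by case: (c i).
    by move: h; case: (c i).
  apply/existsP => [[x]]; rewrite !fe (negbTE ne).
  by case: (x _); case: (c i).
split.
  split.
    by move=> j i; rewrite posE negE; case: (j == p i); case: (c i).
  exists s; split => // j i.
  rewrite /Defs.arc posE negE -andb_orr orNb andbT.
  split => [/eqP ->|->]; by rewrite ?f_invF // /p invF_f.
rewrite /num_neg_arcs /weight.
rewrite (_ : [set q : V * V | neg_arc f q.1 q.2] = [set (p i, i) | i in [set i | c i]]).
  by rewrite card_imset // => a b [_ ->].
apply/setP => [[j i]]; rewrite inE /= negE.
apply/idP/imsetP => [/andP [/eqP -> ci]|[k]]; first by exists i; rewrite ?inE.
by rewrite inE => ck [-> ->]; rewrite eqxx ck.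
Qed.

Lemma even_set {V : finType} : [set y : point V | even_point y] = [set y | par y == false].
Proof. by apply/setP => y; rewrite !inE /even_point wpar; case: (par y). Qed.

Lemma odd_set {V : finType} : [set y : point V | odd_point y] = [set y | par y == true].
Proof. by apply/setP => y; rewrite !inE /odd_point wpar; case: (par y). Qed.

Theorem theorem9 (V : finType) (hV : 0 < #|V|) (f : point V -> point V) :
  (positive_circular f <-> even_self_dual f /\ non_expansive f) /\
  (negative_circular f <-> odd_self_dual f /\ non_expansive f).
Proof.
case/card_gt0P: hV => i0 _.
have fwd : forall b, (is_cycle_graph f /\ odd (num_neg_arcs f) = b) ->
    [set conjugate f x | x in [set: point V]] = [set y | par y == b]
    /\ self_dual f /\ non_expansive f.
  move=> b [cyc hb].
  have [s [c [F O]]] := circ_form cyc.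
  have [_ nn] := form_circ F O.
  rewrite nn wpar in hb; subst b.
  by split; [exact: form_image F O i0 | exact: form_sd F].
have bwd : forall b, self_dual f -> non_expansive f ->
    [set conjugate f x | x in [set: point V]] = [set y | par y == b] ->
    (forall a b', a != b' -> exists u, u \in [set y : point V | par y == b] /\
        pxor (pxor u (pe a)) (pe b') \in [set y : point V | par y == b]) ->
    is_cycle_graph f /\ odd (num_neg_arcs f) = b.
  move=> b sd ne em hu.
  have [s [c F]] := iso_form (sd_ne_iso sd ne).
  have O : Orbit s by apply: (form_orbit F); rewrite em.
  have [cyc nn] := form_circ F O.
  split => //; rewrite nn wpar.
  have : conjugate f pz \in [set conjugate f x | x in [set: point V]] by rewrite imset_f.
  by rewrite em inE (par_conj F) => /eqP.
split; split.
- case=> cyc pos.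
  have [em [sd ne]] := fwd false (conj cyc (negbTE pos)).
  by rewrite /even_self_dual /even_map even_set.
- case=> [[em sd] ne]; rewrite /even_map even_set in em.
  case: (bwd false sd ne em) => [a b' _|cyc hb].
    by exists pz; rewrite !inE !par_xor par_pz !par_pe.
  by split => //; rewrite hb.
- case=> cyc pos.
  have [em [sd ne]] := fwd true (conj cyc pos).
  by rewrite /odd_self_dual /odd_map odd_set.
- case=> [[em sd] ne]; rewrite /odd_map odd_set in em.
  case: (bwd true sd ne em) => [a b' _|cyc hb].
    by exists (pe a); rewrite !inE !par_xor !par_pe.
  by split => //; rewrite hb.
Qed.
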